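(* Let $q$ be a prime power, $\beta$ a primitive element of $\mathbb{F}_{q^2}$, $\mathrm{Tr}(x)=x+x^q$, and $\Psi:\mathbb{F}_{q^2}^n\to\mathbb{F}_q^{2n}$, $\Psi(\alpha_0,\ldots,\alpha_{n-1})=\left(\mathrm{Tr}(\beta\alpha_0),\ldots,\mathrm{Tr}(\beta\alpha_{n-1}),\mathrm{Tr}(\beta^q\alpha_0),\ldots,\mathrm{Tr}(\beta^q\alpha_{n-1})\right)$. Let $\mathscr{C}\subseteq\mathbb{F}_{q^2}^n$. Then $\mathscr{C}$ is an ($\mathbb{F}_q$-linear) additive conjucyclic code of length $n$ over $\mathbb{F}_{q^2}$ if and only if $\mathscr{D}=\Psi(\mathscr{C})$ is a $q$-ary linear cyclic code of length $2n$. Moreover, in this case the minimum Hamming weight of $\mathscr{C}$ equals the minimum symplectic weight of $\mathscr{D}$: $w_h(\mathscr{C})=w_s(\mathscr{D})$.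
   Context: An ($\mathbb{F}_q$-linear) additive code of length $n$ over $\mathbb{F}_{q^2}$ is an $\mathbb{F}_q$-subspace of $\mathbb{F}_{q^2}^n$. It is conjucyclic if it is closed under $T(c_0,\ldots,c_{n-1})=(c_{n-1}^q,c_0,\ldots,c_{n-2})$. A $q$-ary linear cyclic code of length $2n$ is an $\mathbb{F}_q$-subspace of $\mathbb{F}_q^{2n}$ closed under $\sigma(v_0,\ldots,v_{2n-1})=(v_{2n-1},v_0,\ldots,v_{2n-2})$. For $u\in\mathbb{F}_{q^2}^n$, $w_h(u)$ is the number of nonzero coordinates; for $v\in\mathbb{F}_q^{2n}$, $w_s(v)=\#\{j\in\{0,\ldots,n-1\}:(v_j,v_{n+j})\neq(0,0)\}$. The minimum Hamming (resp. symplectic) weight of a code is the minimum of $w_h$ (resp. $w_s$) over its nonzero codewords. *)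

(* Defs.v *)
From HB Require Import structures.
From mathcomp Require Import all_boot all_order all_algebra all_field.
Set Implicit Arguments. Unset Strict Implicit. Unset Printing Implicit Defensive.
Import GRing.Theory.
Local Open Scope ring_scope.

(* F_{q^2} is a finite field L with #|L| = q^2; F_q is realised as the
   subfield {x in L | x^q = x}.  q-ary vectors are rows over L with all
   entries in F_q. *)

Section Defs.
Variables (L : finFieldType) (q : nat).

Definition Fq : {set L} := [set x : L | x ^+ q == x].

Definition Tr (x : L) : L := x + x ^+ q.

Definition Psi (beta : L) n (a : 'rV[L]_n) : 'rV[L]_(n + n) :=
  row_mx (\row_i Tr (beta * a 0 i)) (\row_i Tr (beta ^+ q * a 0 i)).

Definition conjshift n (c : 'rV[L]_n) : 'rV[L]_n :=
  \row_i (if val i == 0%N then c 0 (ord_pred i) ^+ q else c 0 (ord_pred i)).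

Definition cycshift m (v : 'rV[L]_m) : 'rV[L]_m := \row_i v 0 (ord_pred i).

Definition additive_code n (C : {set 'rV[L]_n}) : Prop :=
  [/\ 0 \in C,
      (forall x y, x \in C -> y \in C -> x + y \in C) &
      (forall (a : L) x, a \in Fq -> x \in C -> a *: x \in C)].

Definition additive_conjucyclic n (C : {set 'rV[L]_n}) : Prop :=
  additive_code C /\ (forall c, c \in C -> conjshift c \in C).

Definition qary_linear_code m (D : {set 'rV[L]_m}) : Prop :=
  [/\ (forall v, v \in D -> forall i, v 0 i \in Fq),
      0 \in D,
      (forall x y, x \in D -> y \in D -> x + y \in D) &
      (forall (a : L) x, a \in Fq -> x \in D -> a *: x \in D)].

Definition qary_linear_cyclic m (D : {set 'rV[L]_m}) : Prop :=
  qary_linear_code D /\ (forall v, v \in D -> cycshift v \in D).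

Definition wt_h n (u : 'rV[L]_n) : nat := #|[set i : 'I_n | u 0 i != 0]|.

Definition wt_s n (v : 'rV[L]_(n + n)) : nat :=
  #|[set j : 'I_n | (v 0 (lshift n j), v 0 (rshift n j)) != (0, 0)]|.

Definition is_min_weight m (w : 'rV[L]_m -> nat) (C : {set 'rV[L]_m}) (d : nat)
  : Prop :=
  (exists2 c, c \in C & (c != 0) && (w c == d)) /\
  (forall c, c \in C -> c != 0 -> (d <= w c)%N).

End Defs.

(* Main.v *)
Require Import Defs.
From mathcomp Require Import all_boot all_order all_algebra all_field.
From mathcomp Require Import zify.
Set Implicit Arguments. Unset Strict Implicit. Unset Printing Implicit Defensive.
Import GRing.Theory.
Local Open Scope ring_scope.

Section Basics.
Variables (L : finFieldType) (q : nat).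
Hypothesis hq : exists2 p, prime p & exists k, q = (p ^ k.+1)%N.
Hypothesis hL : #|L| = (q ^ 2)%N.

Lemma frobD (x y : L) : (x + y) ^+ q = x ^+ q + y ^+ q.
Proof.
case: hq => p pp [k qE]. apply: exprDn_pchar.
have pc : p \in [pchar L].
  apply: (@card_finPcharP L p (k.+1 * 2)) => //.
  by rewrite hL qE -expnM mulnC.
by rewrite (eq_pnat _ (pcharf_eq pc)) qE pnatX pnat_id.
Qed.

Lemma q_gt1 : (1 < q)%N.
Proof. case: hq => p pp [k ->]. by rewrite -(expn0 p) ltn_exp2l ?prime_gt1. Qed.

Lemma frobN (x : L) : (- x) ^+ q = - x ^+ q.
Proof.
apply/eqP; rewrite -subr_eq0 opprK -frobD addNr expr0n.
by case: q q_gt1.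
Qed.

Lemma frob2 (x : L) : x ^+ q ^+ q = x.
Proof. by rewrite -exprM mulnn -hL expf_card. Qed.
End Basics.

Section Shift.
Variables (L : finFieldType) (q : nat) (beta : L).
Hypothesis frob2 : forall x : L, x ^+ q ^+ q = x.

Lemma TrA (x : L) : Tr q (beta * x ^+ q) = Tr q (beta ^+ q * x).
Proof. by rewrite /Tr !exprMn !frob2 addrC. Qed.
Lemma TrB (x : L) : Tr q (beta ^+ q * x ^+ q) = Tr q (beta * x).
Proof. by rewrite /Tr !exprMn !frob2 addrC. Qed.

Lemma predv m (i : nat) : (i < m)%N ->
  ((i + m).-1 %% m = if i == 0%N then m.-1 else i.-1)%N.
Proof.
case: i => [|i] h /=.
  by rewrite add0n modn_small // prednK // (leq_ltn_trans _ h).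
by rewrite modnDr modn_small // ltnW.
Qed.

Lemma ord_pred_val m (i : 'I_m) :
  (val (ord_pred i) = if val i == 0%N then m.-1 else (val i).-1)%N.
Proof. by rewrite /= predv. Qed.

Lemma Psi_shift n (c : 'rV[L]_n) :
  Psi q beta (conjshift q c) = cycshift (Psi q beta c).
Proof.
apply/rowP => i; rewrite /cycshift /Psi /conjshift !mxE.
case: splitP => j hj; case: splitP => k hk; rewrite !mxE;
  move: hk; rewrite /= predv ?ltn_ord // hj; have := ltn_ord j; have := ltn_ord k.
- move=> kn jn; case: (boolP ((j : nat) == 0%N)) => j0; rewrite ?j0 ?(eqP j0) /= => hk; first by lia.
  congr (Tr _ (_ * c 0 _)); apply: val_inj; rewrite ord_pred_val ?(negbTE j0) ?j0 ?(eqP j0) /=; lia.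
- move=> kn jn; case: (boolP ((j : nat) == 0%N)) => j0; rewrite ?j0 ?(eqP j0) /= => hk; last by lia.
  rewrite TrA; congr (Tr _ (_ * c 0 _)); apply: val_inj; rewrite ord_pred_val ?(negbTE j0) ?j0 ?(eqP j0) /=; lia.
- move=> kn jn; have -> : (n + j == 0)%N = false by lia.
  case: (boolP ((j : nat) == 0%N)) => j0; rewrite ?j0 ?(eqP j0) /= => hk; last by lia.
  rewrite TrB; congr (Tr _ (_ * c 0 _)); apply: val_inj; rewrite ord_pred_val ?(negbTE j0) ?j0 ?(eqP j0) /=; lia.
- move=> kn jn; have -> : (n + j == 0)%N = false by lia.
  case: (boolP ((j : nat) == 0%N)) => j0; rewrite ?j0 ?(eqP j0) /= => hk; first by lia.
  congr (Tr _ (_ * c 0 _)); apply: val_inj; rewrite ord_pred_val ?(negbTE j0) ?j0 ?(eqP j0) /=; lia.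
Qed.
End Shift.

From mathcomp Require Import ring.

Lemma beta_key (L : finFieldType) (q : nat) (hq1 : (1 < q)%N)
  (hL : #|L| = (q ^ 2)%N) (beta : L) (hb : (#|L|.-1).-primitive_root beta) :
  beta * beta != beta ^+ q * beta ^+ q.
Proof.
apply/eqP => E.
have N0 : (0 < #|L|.-1)%N by rewrite hL -mulnn; nia.
have b0 : beta != 0.
  apply/eqP => b0; have := prim_expr_order hb; rewrite b0 expr0n.
  by rewrite (negbTE (lt0n_neq0 N0)) /= => /eqP; rewrite eq_sym oner_eq0.
have : beta ^+ (q.-1 + q.-1) == 1.
  apply/eqP; apply: (@mulIf _ (beta * beta)); first by rewrite mulf_neq0.
  transitivity (beta ^+ q * beta ^+ q); last by rewrite E mul1r.
  rewrite -expr2 -!exprD; congr (_ ^+ _); lia.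
rewrite -(prim_order_dvd hb) hL => /dvdn_leq; rewrite -mulnn.
have : (0 < q.-1 + q.-1)%N by lia.
move=> h /(_ h). nia.
Qed.

Section Main.
Variables (L : finFieldType) (q : nat) (beta : L).
Hypothesis frobD : forall x y : L, (x + y) ^+ q = x ^+ q + y ^+ q.
Hypothesis frobN : forall x : L, (- x) ^+ q = - x ^+ q.
Hypothesis frob2 : forall x : L, x ^+ q ^+ q = x.
Hypothesis q0 : (0 < q)%N.
Hypothesis key : beta * beta != beta ^+ q * beta ^+ q.

Lemma TrD (x y : L) : Tr q (x + y) = Tr q x + Tr q y.
Proof. by rewrite /Tr frobD; ring. Qed.
Lemma TrN (x : L) : Tr q (- x) = - Tr q x.
Proof. by rewrite /Tr frobN; ring. Qed.
Lemma Tr0 : Tr q (0 : L) = 0.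
Proof. by rewrite /Tr expr0n (negbTE (lt0n_neq0 q0)) addr0. Qed.
Lemma TrZ (a x : L) : a \in Fq L q -> Tr q (a * x) = a * Tr q x.
Proof. by rewrite inE => /eqP ha; rewrite /Tr exprMn ha mulrDr. Qed.
Lemma TrFq (x : L) : Tr q x \in Fq L q.
Proof. by rewrite inE /Tr frobD frob2 addrC. Qed.

Lemma Tr_inj0 (a : L) : Tr q (beta * a) = 0 -> Tr q (beta ^+ q * a) = 0 -> a = 0.
Proof.
rewrite /Tr !exprMn frob2 => h1 h2.
have : (beta * beta - beta ^+ q * beta ^+ q) * a = 0.
  transitivity (beta * (beta * a + beta ^+ q * a ^+ q)
                - beta ^+ q * (beta ^+ q * a + beta * a ^+ q)); first by ring.
  by rewrite h1 h2; ring.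
by move/eqP; rewrite mulf_eq0 subr_eq0 (negbTE key) => /eqP.
Qed.

Notation Ps := (Psi q beta).

Lemma PsiD n (x y : 'rV[L]_n) : Ps (x + y) = Ps x + Ps y.
Proof.
by rewrite /Psi add_row_mx; congr row_mx; apply/rowP => j; rewrite !mxE mulrDr TrD.
Qed.

Lemma PsiN n (x : 'rV[L]_n) : Ps (- x) = - Ps x.
Proof.
rewrite /Psi opp_row_mx; congr row_mx; apply/rowP => j; rewrite !mxE mulrN TrN //.
Qed.

Lemma PsiZ n a (x : 'rV[L]_n) : a \in Fq L q -> Ps (a *: x) = a *: Ps x.
Proof.
move=> ha; rewrite /Psi scale_row_mx; congr row_mx; apply/rowP => j;
  by rewrite !mxE -TrZ // mulrCA.
Qed.

Lemma Psi0 n : Ps (0 : 'rV[L]_n) = 0.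
Proof.
apply/rowP => i; rewrite /Psi !mxE; case: split => j; by rewrite !mxE mulr0 Tr0.
Qed.

Lemma PsiFq n (x : 'rV[L]_n) i : Ps x 0 i \in Fq L q.
Proof. rewrite /Psi !mxE; case: split => j; by rewrite !mxE TrFq. Qed.

Lemma Psi_eq0 n (x : 'rV[L]_n) : Ps x = 0 -> x = 0.
Proof.
move=> h; apply/rowP => j; rewrite mxE; apply: Tr_inj0.
  by have := congr1 (fun v : 'rV[L]_(n + n) => v 0 (lshift n j)) h; rewrite /= /Psi row_mxEl !mxE.
by have := congr1 (fun v : 'rV[L]_(n + n) => v 0 (rshift n j)) h; rewrite /= /Psi row_mxEr !mxE.
Qed.

Lemma Psi_inj n : injective (Psi q beta (n := n)).
Proof.
move=> x y h; apply/eqP; rewrite -subr_eq0; apply/eqP/Psi_eq0.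
by rewrite PsiD PsiN h addrN.
Qed.

Lemma Psi_wt n (x : 'rV[L]_n) : wt_s (Ps x) = wt_h x.
Proof.
rewrite /wt_s /wt_h; apply: eq_card => j; rewrite !inE /Psi row_mxEl row_mxEr !mxE.
apply/idP/idP.
  apply: contra => /eqP ->; by rewrite !mulr0 Tr0.
apply: contra => /eqP [h1 h2]; apply/eqP; exact: Tr_inj0.
Qed.
End Main.


Unset Implicit Arguments.
Theorem theorem3p6 (L : finFieldType) (q : nat)
  (hq : exists2 p, prime p & exists k, q = (p ^ k.+1)%N)
  (hL : #|L| = (q ^ 2)%N)
  (beta : L) (hbeta : (#|L|.-1).-primitive_root beta)
  (n : nat) (C : {set 'rV[L]_n}) :
  let D := [set Psi q beta c | c in C] in
  (additive_conjucyclic q C <-> qary_linear_cyclic q D) /\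
  (additive_conjucyclic q C ->
     forall d : nat,
       is_min_weight (@wt_h L n) C d <-> is_min_weight (@wt_s L n) D d).
Proof.
move=> D.
have fD := frobD hq hL; have fN := frobN hq hL; have f2 := frob2 hL.
have q1 := q_gt1 hq; have q0 : (0 < q)%N by apply: ltnW.
have key := beta_key q1 hL hbeta.
have inj := Psi_inj fD fN f2 key (n := n).
have PD : forall c, (Psi q beta c \in D) = (c \in C).
  move=> c; apply/idP/idP; last by move=> h; apply: imset_f.
  by case/imsetP => c' hc' /inj ->.
have P0 : Psi q beta (0 : 'rV[L]_n) = 0 by apply: Psi0 q0 n.
split.
  split.
    case=> [[C0 CD CZ] CS]; split; first split.
    - move=> v /imsetP [c _ ->] i; exact: PsiFq.
    - by rewrite -P0 PD.
    - move=> x y /imsetP [a aC ->] /imsetP [b bC ->].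
      by rewrite -(PsiD beta fD) PD CD.
    - move=> a x ha /imsetP [b bC ->].
      by rewrite -(PsiZ beta) // PD CZ.
    - move=> v /imsetP [c cC ->].
      by rewrite -(Psi_shift beta f2) PD CS.
  case=> [[DF D0 DD DZ] DS]; split; first split.
  - by rewrite -PD P0.
  - by move=> x y xC yC; rewrite -PD (PsiD beta fD) DD // PD.
  - by move=> a x ha xC; rewrite -PD (PsiZ beta) // DZ // PD.
  - by move=> c cC; rewrite -PD (Psi_shift beta f2) DS // PD.
move=> _ d.
have nz : forall c : 'rV[L]_n, (Psi q beta c != 0) = (c != 0).
  move=> c; apply/idP/idP; apply: contra => /eqP h.
    by rewrite h P0.
  by rewrite -P0 in h; rewrite (inj _ _ h).
have W := Psi_wt (beta := beta) f2 q0 key.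
split.
  case=> [[c cC /andP [c0 /eqP cw]] hmin]; split.
    exists (Psi q beta c); first by rewrite PD.
    by rewrite nz c0 W cw eqxx.
  move=> v /imsetP [c' c'C ->]; rewrite nz W; exact: hmin.
case=> [[v /imsetP [c cC ->] /andP [c0 /eqP cw]] hmin]; split.
  exists c => //; by rewrite -nz c0 -W cw eqxx.
move=> e eC e0; rewrite -W; apply: hmin; by [rewrite PD | rewrite nz].
Qed.
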